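(* Let $f$ be a positive even integer and let $G(\mathcal V,\mathcal E)$ be a 2-clique network (for this $f$). Then for every partition $A,B,F$ of $\mathcal V$ with $A,B$ non-empty and $|F|\le f$, either $A \Rightarrow_{\mathcal V - F} B$ or $B \Rightarrow_{\mathcal V - F} A$.
   Context: A simple directed graph $G(\mathcal V,\mathcal E)$ with $n=6f+2$ nodes, $f$ a positive even integer, is a 2-clique network if: $\mathcal V$ is the disjoint union of $K_1=\{u_1,\dots,u_{3f+1}\}$ and $K_2=\{w_1,\dots,w_{3f+1}\}$; $(u_i,u_j)\in\mathcal E$ and $(w_i,w_j)\in\mathcal E$ for all $1\le i,j\le 3f+1$, $i\ne j$; $(u_i,w_i)\in\mathcal E$ for $1\le i\le \frac{3f}{2}$ and for $i=3f+1$; and $(w_i,u_i)\in\mathcal E$ for $\frac{3f}{2}+1\le i\le 3f$ and for $i=3f+1$. An $(X,y)$-path is a directed path from some node of $X$ to the node $y\notin X$; it excludes $F$ if it contains no node of $F$; $(X,y)$-paths are disjoint if they pairwise share only $y$. For pairwise disjoint $X,Y,F\subseteq\mathcal V$ with $|F|\le f$, $X \Rightarrow_{\mathcal V - F} Y$ means: $Y=\emptyset$, or every $y\in Y$ has at least $f+1$ pairwise disjoint $(X,y)$-paths excluding $F$. *)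

(* Defs.v *)
From mathcomp Require Import all_boot.
Set Implicit Arguments. Unset Strict Implicit. Unset Printing Implicit Defensive.

(* Vertex type of the 2-clique network for parameter f:
   inl i  stands for u_(i+1), inr i stands for w_(i+1), with i : 'I_(3f+1). *)
Definition tcn_vertex (f : nat) : finType :=
  ('I_(3 * f).+1 + 'I_(3 * f).+1)%type.

(* The edge relation of the 2-clique network (exactly the listed edges),
   with 0-based indices: 1-based i in [1, 3f/2] <-> 0-based i < 3f/2;
   1-based 3f+1 <-> 0-based 3f; 1-based [3f/2+1, 3f] <-> 0-based [3f/2, 3f). *)
Definition tcn_edge (f : nat) : rel (tcn_vertex f) :=
  fun a b =>
    match a, b with
    | inl i, inl j => i != j
    | inr i, inr j => i != j
    | inl i, inr j => (val i == val j) && ((val i < (3 * f)./2) || (val i == 3 * f))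
    | inr i, inl j => (val i == val j) &&
                      (((3 * f)./2 <= val i < 3 * f) || (val i == 3 * f))
    end.

Definition XyPath (V : finType) (e : rel V) (X F : {set V}) (y : V) (p : seq V) : Prop :=
  match p with
  | [::] => False
  | x :: s => [/\ x \in X, path e x s, last x s = y, uniq (x :: s)
              & all (fun v => v \notin F) (x :: s)]
  end.

Definition reaches (V : finType) (e : rel V) (f : nat) (X Y F : {set V}) : Prop :=
  Y = set0 \/
  forall y, y \in Y ->
    exists P : 'I_f.+1 -> seq V,
      (forall i, XyPath e X F y (P i)) /\
      (forall i j, i != j -> forall v, v \in P i -> v \in P j -> v = y).

(* Main.v *)
Require Import Defs.
From mathcomp Require Import all_boot.
From mathcomp Require Import zify.

Set Implicit Arguments. Unset Strict Implicit. Unset Printing Implicit Defensive.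

Section Aux.
Variable f : nat.
Local Notation V := (tcn_vertex f).
Local Notation e := (@tcn_edge f).

Definition side (v : V) : bool := if v is inl _ then true else false.
Definition partner (v : V) : V := match v with inl i => inr i | inr i => inl i end.
Definition Kset (s : bool) : {set V} := [set v | side v == s].
Definition cross (X Y : {set V}) (s : bool) : {set V} :=
  [set v | [&& v \in X, side v != s, e v (partner v) & partner v \in Y]].
Definition route (y v : V) : seq V :=
  if side v == side y then [:: v; y]
  else if partner v == y then [:: v; y] else [:: v; partner v; y].
Definition Src (X Y : {set V}) (s : bool) : {set V} := (X :&: Kset s) :|: cross X Y s.

Lemma edge_same (v w : V) : side v = side w -> v != w -> e v w.
Proof. by case: v => i; case: w => j. Qed.

Lemma partner_side (v : V) : side (partner v) = ~~ side v.
Proof. by case: v. Qed.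

Lemma partner_inj : injective partner.
Proof. by case=> i [] j //= [->]. Qed.

Lemma neq_side (v w : V) : side v != side w -> v != w.
Proof. by apply: contraNneq => ->. Qed.


Lemma route_path (X Y F : {set V}) (y v : V) :
  [disjoint X & Y] -> [disjoint X & F] -> [disjoint Y & F] ->
  y \in Y -> v \in Src X Y (side y) -> XyPath e X F y (route y v).
Proof.
move=> dXY dXF dYF yY.
have nF : forall z, z \in X -> z \notin F by move=> z zX; rewrite (disjointFr dXF zX).
have nFY : forall z, z \in Y -> z \notin F by move=> z zY; rewrite (disjointFr dYF zY).
have nXY : forall z, z \in X -> z \notin Y by move=> z zX; rewrite (disjointFr dXY zX).
have neqy : forall z, z \in X -> z != y.
  by move=> z zX; apply: contraNneq (nXY z zX) => ->.
rewrite /Src !inE => /orP [/andP [vX /eqP sv] | /and4P [vX sv evp pY]].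
  rewrite /route sv eqxx /= vX (edge_same sv (neqy v vX)) /=.
  by rewrite inE (neqy v vX) nF // nFY.
rewrite /route (negbTE sv).
case: eqP => [pv | /eqP pv].
  by rewrite /= vX -pv evp /= inE pv (neqy v vX) nF //= -pv nFY.
have sp : side (partner v) = side y.
  by move: sv; rewrite partner_side; case: (side v); case: (side y).
have vp : v != partner v by apply: neq_side; rewrite partner_side; case: (side v).
rewrite /= vX evp (edge_same sp pv) /= !inE negb_or vp (neqy v vX) pv /=.
by rewrite nF // !nFY.
Qed.

Lemma route_mem (X Y : {set V}) (y v z : V) :
  v \in Src X Y (side y) -> z \in route y v ->
  [\/ z = y, z = v | z = partner v /\ partner v \in Y].
Proof.
rewrite /Src !inE => /orP [/andP [vX /eqP sv] | /and4P [vX sv evp pY]].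
  rewrite /route sv eqxx !inE => /orP [/eqP -> | /eqP ->].
    by constructor 2.
  by constructor 1.
rewrite /route (negbTE sv); case: eqP => _; rewrite !inE.
  move=> /orP [/eqP -> | /eqP ->]; [by constructor 2 | by constructor 1].
move=> /orP [/eqP -> | /orP [/eqP -> | /eqP ->]].
- by constructor 2.
- by constructor 3.
- by constructor 1.
Qed.

Lemma Src_sub (X Y : {set V}) s v : v \in Src X Y s -> v \in X.
Proof. by rewrite /Src !inE => /orP [/andP [] | /and4P []]. Qed.

Lemma route_disj (X Y : {set V}) (y v w z : V) :
  [disjoint X & Y] ->
  v \in Src X Y (side y) -> w \in Src X Y (side y) -> v != w ->
  z \in route y v -> z \in route y w -> z = y.
Proof.
move=> dXY vS wS vw zv zw.
have vX := Src_sub vS; have wX := Src_sub wS.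
have nXY : forall z, z \in X -> z \notin Y by move=> u uX; rewrite (disjointFr dXY uX).
case: (route_mem vS zv) => [// | zv' | [zv' pY]];
case: (route_mem wS zw) => [// | zw' | [zw' pY']].
- by move: vw; rewrite -zv' -zw' eqxx.
- by move: (nXY _ vX); rewrite -zv' zw' pY'.
- by move: (nXY _ wX); rewrite -zw' zv' pY.
- by move: vw; rewrite (partner_inj (etrans (esym zv') zw')) eqxx.
Qed.

Lemma reach_of (X Y F : {set V}) :
  [disjoint X & Y] -> [disjoint X & F] -> [disjoint Y & F] ->
  (forall y, y \in Y -> f.+1 <= #|Src X Y (side y)|) ->
  reaches e f X Y F.
Proof.
move=> dXY dXF dYF H; right=> y yY.
have Hy := H y yY.
exists (fun i => route y (enum_val (widen_ord Hy i))); split.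
  by move=> i; apply: (route_path dXY dXF dYF yY (enum_valP (widen_ord Hy i))).
move=> i j ij z zi zj.
apply: (route_disj dXY (enum_valP (widen_ord Hy i)) (enum_valP (widen_ord Hy j)) _ zi zj).
apply: contra ij => /eqP /enum_val_inj [] /val_inj ->; exact: eqxx.
Qed.


Local Notation n := (3 * f).+1.

Lemma card_sum (C : {set V}) :
  #|C| = \sum_(j < n) (inl j \in C) + \sum_(j < n) (inr j \in C).
Proof.
rewrite -sum1_card big_mkcond /= big_sumType /=.
by congr (_ + _); apply: eq_bigr => j _; case: (_ \in C).
Qed.

Lemma card_Src (X Y : {set V}) s :
  #|Src X Y s| = #|X :&: Kset s| + #|cross X Y s|.
Proof.
rewrite /Src -cardsUI.
suff -> : X :&: Kset s :&: cross X Y s = set0 by rewrite cards0 addn0.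
apply/setP=> v; rewrite !inE.
by case: (side v == s) => /=; rewrite ?andbF.
Qed.

Lemma card_K1 (X : {set V}) : #|X :&: Kset true| = \sum_(j < n) (inl j \in X).
Proof.
rewrite card_sum [X in _ + X]big1 ?addn0; last by move=> j _; rewrite !inE andbF.
by apply: eq_bigr => j _; rewrite !inE andbT.
Qed.

Lemma card_K2 (X : {set V}) : #|X :&: Kset false| = \sum_(j < n) (inr j \in X).
Proof.
rewrite card_sum [X in X + _]big1 ?add0n; last by move=> j _; rewrite !inE andbF.
by apply: eq_bigr => j _; rewrite !inE andbT.
Qed.

Lemma edge_or (j : 'I_n) : e (inl j) (inr j) || e (inr j) (inl j).
Proof.
rewrite /= eqxx /=; have := ltn_ord j.
case: (ltnP (val j) (3 * f)./2) => //= h1.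
case: (ltnP (val j) (3 * f)) => /= h2 h3; rewrite ?orbT //.
have -> : nat_of_ord j == 3 * f by apply/eqP; lia.
by rewrite orbT.
Qed.


Definition Lc (X : {set V}) := \sum_(j < n) (inl j \in X).
Definition Rc (X : {set V}) := \sum_(j < n) (inr j \in X).

Lemma inl_cross X Y s (j : 'I_n) :
  (inl j \in cross X Y s) = [&& inl j \in X, true != s, e (inl j) (inr j) & inr j \in Y].
Proof. by rewrite inE. Qed.
Lemma inr_cross X Y s (j : 'I_n) :
  (inr j \in cross X Y s) = [&& inr j \in X, false != s, e (inr j) (inl j) & inl j \in Y].
Proof. by rewrite inE. Qed.

Lemma card_LR (C : {set V}) : #|C| = Lc C + Rc C.
Proof. exact: card_sum. Qed.

Lemma sum_ge (P : 'I_n -> nat) : (forall j, 1 <= P j) -> n <= \sum_(j < n) P j.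
Proof.
move=> H; apply: leq_trans (_ : \sum_(j < n) 1 <= _).
  by rewrite sum_nat_const card_ord muln1.
by apply: leq_sum => j _; exact: H.
Qed.

Lemma sum_eq (P : 'I_n -> nat) : (forall j, P j = 1) -> \sum_(j < n) P j = n.
Proof.
move=> H; rewrite (eq_bigr (fun _ => 1)); last by move=> j _; exact: H.
by rewrite sum_nat_const card_ord muln1.
Qed.

End Aux.

Theorem lemma9 (f : nat) (f_pos : 0 < f) (f_even : ~~ odd f)
  (A B F : {set tcn_vertex f}) :
  [disjoint A & B] -> [disjoint A & F] -> [disjoint B & F] ->
  A :|: B :|: F = setT ->
  A != set0 -> B != set0 -> #|F| <= f ->
  reaches (@tcn_edge f) f A B F \/ reaches (@tcn_edge f) f B A F.
Proof.
move=> dAB dAF dBF cov _ _ cF.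
have part : forall v : tcn_vertex f, (v \in A) + (v \in B) + (v \in F) = 1.
  move=> v; have : v \in A :|: B :|: F by rewrite cov inE.
  rewrite !inE; case Av: (v \in A); case Bv: (v \in B); case Fv: (v \in F) => //=.
  - by rewrite (disjointFr dAB Av) in Bv.
  - by rewrite (disjointFr dAB Av) in Bv.
  - by rewrite (disjointFr dAF Av) in Fv.
  - by rewrite (disjointFr dBF Bv) in Fv.
have S1 : Lc A + Lc B + Lc F = (3 * f).+1.
  by rewrite /Lc -!big_split /=; apply: sum_eq => j; exact: part.
have S2 : Rc A + Rc B + Rc F = (3 * f).+1.
  by rewrite /Rc -!big_split /=; apply: sum_eq => j; exact: part.
have SF := card_LR F.
have C1 := card_LR (cross A B true).
have C2 := card_LR (cross A B false).
have C3 := card_LR (cross B A true).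
have C4 := card_LR (cross B A false).
have H4 : (3 * f).+1 <= Rc A + Lc B + Lc (cross A B false) + Rc (cross B A true) + Lc F + Rc F.
  rewrite /Lc /Rc -!big_split /=; apply: sum_ge => j.
  rewrite inl_cross inr_cross.
  move: (part (inl j)) (part (inr j)) (edge_or j).
  case: (inl j \in A); case: (inl j \in B); case: (inl j \in F);
  case: (inr j \in A); case: (inr j \in B); case: (inr j \in F);
  case: (tcn_edge (inl j) (inr j)); case: (tcn_edge (inr j) (inl j)) => //.
have H5 : (3 * f).+1 <= Lc A + Rc B + Rc (cross A B true) + Lc (cross B A false) + Lc F + Rc F.
  rewrite /Lc /Rc -!big_split /=; apply: sum_ge => j.
  rewrite inl_cross inr_cross.
  move: (part (inl j)) (part (inr j)) (edge_or j).
  case: (inl j \in A); case: (inl j \in B); case: (inl j \in F);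
  case: (inr j \in A); case: (inr j \in B); case: (inr j \in F);
  case: (tcn_edge (inl j) (inr j)); case: (tcn_edge (inr j) (inl j)) => //.
have D : ((Lc B = 0 \/ f.+1 <= Lc A + #|cross A B true|) /\
          (Rc B = 0 \/ f.+1 <= Rc A + #|cross A B false|)) \/
         ((Lc A = 0 \/ f.+1 <= Lc B + #|cross B A true|) /\
          (Rc A = 0 \/ f.+1 <= Rc B + #|cross B A false|)) by lia.
case: D => [[Da Db] | [Da Db]]; [left | right].
  apply: reach_of => // y yY; rewrite card_Src.
  case sy: (side y).
    have : 0 < #|B :&: Kset f true| by apply/card_gt0P; exists y; rewrite !inE yY sy.
    rewrite card_K1 -/(Lc B) => ?; rewrite card_K1 -/(Lc A); lia.
  have : 0 < #|B :&: Kset f false| by apply/card_gt0P; exists y; rewrite !inE yY sy.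
  rewrite card_K2 -/(Rc B) => ?; rewrite card_K2 -/(Rc A); lia.
apply: reach_of => //; first by rewrite disjoint_sym.
move=> y yY; rewrite card_Src.
case sy: (side y).
  have : 0 < #|A :&: Kset f true| by apply/card_gt0P; exists y; rewrite !inE yY sy.
  rewrite card_K1 -/(Lc A) => ?; rewrite card_K1 -/(Lc B); lia.
have : 0 < #|A :&: Kset f false| by apply/card_gt0P; exists y; rewrite !inE yY sy.
rewrite card_K2 -/(Rc A) => ?; rewrite card_K2 -/(Rc B); lia.
Qed.
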